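(* Let $(b_1,\ldots,b_m,\alpha,\beta,\gamma)$ be a reduced Schubert problem with $\alpha\le\beta\le\gamma$ and $\alpha<\gamma$. Then $K(b_1,\ldots,b_m,\alpha,\beta+\gamma) < K(b_1,\ldots,b_m,\gamma,\beta+\alpha)$.
   Context: A Schubert problem is a finite list $a_\bullet=(a_1,\ldots,a_k)$ of positive integers with even sum; set $n(a_\bullet)=\frac12(a_1+\cdots+a_k+2)$. It is valid if $a_i\le n(a_\bullet)-1$ for all $i$, and reduced if it is valid and $a_i+a_j\le n(a_\bullet)-1$ for all $i<j$. For such a list, $K(a_\bullet)$ is the number of Young tableaux of shape $(n(a_\bullet)-1,n(a_\bullet)-1)$ and content $(a_1,\ldots,a_k)$: two-rowed arrays of integers, each row of length $n(a_\bullet)-1$, weakly increasing along rows, strictly increasing down columns, with exactly $a_i$ occurrences of $i$ for each $i$. *)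

(* Defs.v *)
From mathcomp Require Import all_boot.
Set Implicit Arguments. Unset Strict Implicit. Unset Printing Implicit Defensive.

Definition nS (a : seq nat) : nat := (sumn a + 2)./2.

Definition schubert (a : seq nat) : bool :=
  all (fun x => 0 < x) a && ~~ odd (sumn a).

Definition valid (a : seq nat) : bool :=
  schubert a && all (fun x => x <= nS a - 1) a.

Definition reduced (a : seq nat) : bool :=
  valid a &&
  [forall i : 'I_(size a), forall j : 'I_(size a),
     (i < j) ==> (nth 0 a i + nth 0 a j <= nS a - 1)].

(* A two-rowed array, each row of length nS a - 1, with entries in
   {1,...,size a}; the entry value i+1 is encoded by (i : 'I_(size a)). *)
Definition tabT (a : seq nat) : finType :=
  ({ffun 'I_(nS a - 1) -> 'I_(size a)} * {ffun 'I_(nS a - 1) -> 'I_(size a)})%type.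

Definition is_tableau (a : seq nat) (t : tabT a) : bool :=
  [forall j1 : 'I_(nS a - 1), forall j2 : 'I_(nS a - 1),
     (j1 <= j2) ==> ((t.1 j1 <= t.1 j2) && (t.2 j1 <= t.2 j2))] &&
  [forall j : 'I_(nS a - 1), t.1 j < t.2 j] &&
  [forall i : 'I_(size a),
     #|[set j | t.1 j == i]| + #|[set j | t.2 j == i]| == nth 0 a i].

Definition K (a : seq nat) : nat := #|[set t : tabT a | is_tableau t]|.

(* Main.v *)
Require Import Defs.
From mathcomp Require Import all_boot.
From mathcomp Require Import zify.
Set Implicit Arguments. Unset Strict Implicit. Unset Printing Implicit Defensive.

Definition tab N k := ({ffun 'I_N -> 'I_k} * {ffun 'I_N -> 'I_k})%type.
Definition istab N k (a : seq nat) (t : tab N k) : bool :=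
  [forall j1 : 'I_N, forall j2 : 'I_N,
     (j1 <= j2) ==> ((t.1 j1 <= t.1 j2) && (t.2 j1 <= t.2 j2))] &&
  [forall j : 'I_N, t.1 j < t.2 j] &&
  [forall i : 'I_k,
     #|[set j | t.1 j == i]| + #|[set j | t.2 j == i]| == nth 0 a i].
Definition Kg N k a := #|[set t : tab N k | istab a t]|.
Lemma K_Kg a : K a = Kg (nS a - 1) (size a) a. Proof. by []. Qed.

Lemma istabP N k a (t : tab N k) :
  reflect [/\ (forall j1 j2 : 'I_N, j1 <= j2 -> t.1 j1 <= t.1 j2),
            (forall j1 j2 : 'I_N, j1 <= j2 -> t.2 j1 <= t.2 j2),
            (forall j, t.1 j < t.2 j) &
            (forall i : 'I_k, #|[set j | t.1 j == i]| + #|[set j | t.2 j == i]| = nth 0 a i)]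
   (istab a t).
Proof.
apply: (iffP idP).
  case/andP => /andP [/forallP H1 /forallP H2] /forallP H3; split.
  - by move=> j1 j2 h; have /forallP/(_ j2)/implyP/(_ h)/andP[] := H1 j1.
  - by move=> j1 j2 h; have /forallP/(_ j2)/implyP/(_ h)/andP[] := H1 j1.
  - exact: H2.
  - by move=> i; apply/eqP.
case=> H1 H2 H3 H4; apply/andP; split; first (apply/andP; split).
- apply/forallP=> j1; apply/forallP=> j2; apply/implyP=> h.
  by rewrite H1 // H2.
- by apply/forallP.
- by apply/forallP=> i; rewrite H4.
Qed.

Lemma card_iota N (p : pred nat) : #|[set j : 'I_N | p j]| = count p (iota 0 N).
Proof.
rewrite -val_enum_ord count_map cardE.
rewrite /enum_mem -enumT size_filter filter_predT.
by apply: eq_count => j /=; rewrite inE.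
Qed.

Lemma count_int lo hi N :
  count (fun x => (lo <= x) && (x < hi)) (iota 0 N) = minn hi N - lo.
Proof.
elim: N => [|N IH]; first by rewrite /= minn0.
rewrite -addn1 iotaD count_cat IH /= add0n.
case: (boolP ((lo <= N) && (N < hi))) => /= h; lia.
Qed.
Fixpoint word (o : nat) (b : seq nat) : seq nat :=
  if b is x :: b' then nseq x o ++ word o.+1 b' else [::].

Lemma size_word o b : size (word o b) = sumn b.
Proof. by elim: b o => //= x b IH o; rewrite size_cat size_nseq IH. Qed.

Lemma all_word o b : all (fun v => (o <= v) && (v < o + size b)) (word o b).
Proof.
elim: b o => //= x b IH o; rewrite all_cat; apply/andP; split.
  by apply/allP => v /nseqP [-> _]; rewrite leqnn /=; lia.
apply: sub_all (IH o.+1) => v /andP [h1 h2]; apply/andP; split; lia.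
Qed.

Lemma path_word o b : path leq o (word o b).
Proof.
elim: b o => //= x b IH o; rewrite cat_path; apply/andP; split.
  by elim: x => //= x ->; rewrite leqnn.
have -> : last o (nseq x o) = o by elim: x.
have := IH o.+1; case: (word o.+1 b) => //= y w /andP [h1 h2].
by rewrite h2 andbT; apply: leq_trans h1.
Qed.

Lemma sorted_word o b : sorted leq (word o b).
Proof. exact: (path_sorted (path_word o b)). Qed.

Lemma count_word o b v :
  count (pred1 v) (word o b) = if o <= v then nth 0 b (v - o) else 0.
Proof.
elim: b o => [|x b IH] o /=; first by case: ifP => _ //; rewrite nth_nil.

rewrite count_cat count_nseq IH /=.
case: (ltngtP o v) => h.
- by rewrite -(subnSK h).
- by [].
- by subst v; rewrite subnn /= mul1n addn0.
Qed.

Lemma sorted_gap (s : seq nat) P j : sorted leq s -> j + P < size s ->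
  (forall v, count (pred1 v) s <= P) -> nth 0 s j < nth 0 s (j + P).
Proof.
move=> Hs hj hc.
have le := sorted_leq_nth leq_trans leqnn 0 Hs.
have hle : nth 0 s j <= nth 0 s (j + P) by apply: le; rewrite ?inE; lia.
rewrite ltn_neqAle hle andbT; apply/negP => /eqP E.
set v := nth 0 s j in E.
have : P.+1 <= count (pred1 v) s; last by have := hc v; lia.
rewrite -(cat_take_drop j s) count_cat -(cat_take_drop P.+1 (drop j s)) count_cat.
have -> : count (pred1 v) (take P.+1 (drop j s)) = P.+1.
  have hs : size (take P.+1 (drop j s)) = P.+1 by rewrite size_take size_drop; case: ifP; lia.
  rewrite -{2}hs; apply/eqP; rewrite -all_count.
  apply/(all_nthP 0) => i hi; rewrite hs in hi.
  rewrite nth_take // nth_drop /=; apply/eqP/anti_leq; apply/andP; split.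
    by rewrite E; apply: le; rewrite ?inE; lia.
  by apply: le; rewrite ?inE; lia.
lia.
Qed.
Lemma card_int N lo hi : #|[set j : 'I_N | (lo <= j) && (j < hi)]| = minn hi N - lo.
Proof. by rewrite (card_iota N (fun x => (lo <= x) && (x < hi))) count_int. Qed.

Lemma up_card N k (r : 'I_N -> 'I_k) (V : 'I_k) :
  (forall j1 j2 : 'I_N, j1 <= j2 -> r j1 <= r j2) -> (forall j, r j <= V) ->
  forall j : 'I_N, r j = V -> N - j <= #|[set j' | r j' == V]|.
Proof.
move=> mono bnd j E.
have <- : #|[set j' : 'I_N | (j <= j') && (j' < N)]| = N - j.
  by rewrite card_int minnn.
apply: subset_leq_card; apply/subsetP => j'; rewrite !inE => /andP [h _].
apply/eqP/val_inj/anti_leq; rewrite bnd /= -E; exact: mono.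
Qed.

Lemma down_card N k (r : 'I_N -> 'I_k) (V : 'I_k) :
  (forall j1 j2 : 'I_N, j1 <= j2 -> r j1 <= r j2) -> (forall j, r j <= V) ->
  forall j : 'I_N, r j != V -> #|[set j' | r j' == V]| <= N - j.+1.
Proof.
move=> mono bnd j E.
have <- : #|[set j' : 'I_N | (j.+1 <= j') && (j' < N)]| = N - j.+1.
  by rewrite card_int minnn.
apply: subset_leq_card; apply/subsetP => j'; rewrite !inE => /eqP h.
rewrite ltn_ord andbT ltnNge; apply/negP => hj.
have := mono _ _ hj; rewrite h => h2.
by move: E; rewrite -val_eqE eqn_leq bnd h2.
Qed.

Lemma nth_app2 (b : seq nat) x y i :
  nth 0 (b ++ [:: x; y]) i =
  if i < size b then nth 0 b i else if i == size b then x
  else if i == (size b).+1 then y else 0.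
Proof.
rewrite nth_cat; case: ifP => // h.
case: (ltngtP i (size b)) => h2; first by rewrite h2 in h.
- rewrite -(subnSK h2); case E: (i - (size b).+1) => [|k] /=.
    by have -> : i == (size b).+1 by apply/eqP; move: E h2; clear; lia.
  rewrite nth_nil ifF //; apply/negP => /eqP E2; move: E; rewrite E2 subnn //.
- by rewrite h2 subnn.
Qed.

Lemma facts1 b m al be ga N (t : tab N m.+2) : size b = m ->
  be + ga <= N -> al + be <= N -> istab (b ++ [:: al; be+ga]) t ->
  [/\ forall j, t.1 j <= m,
      forall j, (t.2 j == inord m.+1) = (N - (be+ga) <= j),
      forall j, t.2 j <= m.+1,
      #|[set j | t.1 j == inord m]| <= al &
      [/\ #|[set j | t.1 j == inord m]| + #|[set j | t.2 j == inord m]| = al,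
       #|[set j | t.1 j == inord m.+1]| = 0 &
       forall j : 'I_N, j < N - be - al -> t.1 j != inord m]].
Proof.
move=> hm hbg hab /istabP [H1 H2 H3 H4].
have vM0 : (inord m : 'I_m.+2) = m :> nat by rewrite inordK.
have vM1 : (inord m.+1 : 'I_m.+2) = m.+1 :> nat by rewrite inordK.
have b2 : forall j, t.2 j <= m.+1 by move=> j; have := ltn_ord (t.2 j); lia.
have b1 : forall j, t.1 j <= m by move=> j; have := H3 j; have := b2 j; lia.
have c0 : #|[set j | t.1 j == inord m.+1]| = 0.
  apply/eqP; rewrite cards_eq0; apply/eqP/setP => j; rewrite !inE.
  by apply/negbTE; rewrite -val_eqE /= vM1; have := b1 j; lia.
have cM1 : #|[set j | t.2 j == inord m.+1]| = be + ga.
  by have := H4 (inord m.+1); rewrite c0 nth_app2 vM1 hm ltnNge leqnSn /= (gtn_eqF (ltnSn m)) eqxx.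
have cM0 : #|[set j | t.1 j == inord m]| + #|[set j | t.2 j == inord m]| = al.
  by have := H4 (inord m); rewrite nth_app2 vM0 hm ltnn eqxx.
have bb2 : forall j, t.2 j <= (inord m.+1 : 'I_m.+2) by move=> j; rewrite vM1.
have bb1 : forall j, t.1 j <= (inord m : 'I_m.+2) by move=> j; rewrite vM0.
split => //.
- move=> j; apply/idP/idP => [/eqP E|h].
    by have := up_card H2 bb2 E; rewrite cM1; lia.
  apply/negPn/negP => E; have := down_card H2 bb2 E; rewrite cM1; have := ltn_ord j; lia.
- lia.
- split => // j hj; apply/negP => /eqP E.
  have := up_card H1 bb1 E; lia.
Qed.

Definition fmap N m (L : nat) (t : tab N m.+2) : tab N m.+2 :=
  (t.1, [ffun j => if (t.2 j == inord m.+1) && (j < L) then inord m else t.2 j]).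

Lemma f_in b m al be ga N (t : tab N m.+2) : size b = m ->
  be + ga <= N -> al + be <= N -> al <= ga ->
  istab (b ++ [:: al; be+ga]) t -> istab (b ++ [:: ga; be+al]) (fmap (N - be - al) t).
Proof.
move=> hm hbg hab hag ht.
have [F1 F3 F2b Fal [Fc0 Fc1 F5]] := facts1 hm hbg hab ht.
have /istabP [H1 H2 H3 H4] := ht.
have vM0 : (inord m : 'I_m.+2) = m :> nat by rewrite inordK.
have vM1 : (inord m.+1 : 'I_m.+2) = m.+1 :> nat by rewrite inordK.
set L := N - be - al.
have E2 : forall j, (fmap L t).2 j =
   if (N - (be+ga) <= j) && (j < L) then inord m else t.2 j.
  by move=> j; rewrite ffunE F3.
have hi : forall j : 'I_N, N - (be+ga) <= j -> t.2 j = m.+1 :> nat.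
  by move=> j; rewrite -F3 => /eqP ->.
have hlo : forall j : 'I_N, j < N - (be+ga) -> t.2 j <= m.
  move=> j hj; have : t.2 j != inord m.+1 by rewrite F3 -ltnNge.
  by rewrite -val_eqE /= vM1; have := F2b j; lia.
apply/istabP; split.
- exact: H1.
- move=> j1 j2 h; rewrite !E2.
  have := hi j1; have := hi j2; have := hlo j1; have := hlo j2; have := H2 _ _ h.
  case: ifP => c1; case: ifP => c2; rewrite ?vM0; move: c1 c2; lia.
- move=> j; rewrite E2 /=; case: ifP => c; last exact: H3.
  rewrite vM0; have := F1 j; have : t.1 j != inord m by apply: F5; move: c; lia.
  rewrite -val_eqE /= vM0; lia.
- move=> i; rewrite nth_app2 hm.
  have hb : forall j, (t.2 j == i) -> (t.2 j == i) by [].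
  have := ltn_ord i; case: (ltngtP i m) => hi0 hi1.
  + have := H4 i; rewrite nth_app2 hm hi0 => <-.
    congr (_ + _); apply: eq_card => j.
    rewrite !inE E2; case: ifP => // /andP [c _].
    by rewrite -!val_eqE /= vM0 (hi _ c) (gtn_eqF hi0) (gtn_eqF (ltnW hi0 : i < m.+1)).
  + have ei : i = inord m.+1 by apply/val_inj; rewrite /= vM1; lia.
    rewrite ifT; last by apply/eqP; lia.
    have -> : [set j | (fmap L t).1 j == i] = [set j | t.1 j == inord m.+1] by rewrite ei.
    rewrite Fc1 add0n.
    have -> : [set j | (fmap L t).2 j == i] = [set j : 'I_N | (L <= j) && (j < N)].
      apply/setP => j; rewrite !inE E2 ltn_ord andbT ei.
      case: ifP => c; first by rewrite -val_eqE /= vM0 vM1; move: c; lia.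
      case: (leqP (N - (be + ga)) j) => c2.
        by rewrite F3 c2; move: c c2; lia.
      rewrite -val_eqE /= vM1; have := hlo _ c2; lia.
    by rewrite card_int minnn; lia.
  + have ei : i = inord m by apply/val_inj; rewrite /= vM0.
    have -> : [set j | (fmap L t).2 j == i] =
        [set j | t.2 j == inord m] :|: [set j : 'I_N | (N - (be+ga) <= j) && (j < L)].
      apply/setP => j; rewrite !inE E2 ei.
      case: ifP => c; first by rewrite eqxx orbT.
      rewrite orbF //.
    rewrite cardsU.
    have -> : [set j | t.2 j == inord m] :&: [set j : 'I_N | (N - (be+ga) <= j) && (j < L)] = set0.
      apply/setP => j; rewrite !inE; apply/negP => /andP [/eqP e /andP [c1 c2]].
      by have := hi _ c1; rewrite e vM0; lia.
    rewrite cards0 subn0 card_int.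
    have -> : (fmap L t).1 = t.1 by [].
    rewrite ei addnA Fc0; lia.
Qed.

Lemma f_inj b m al be ga N (t s : tab N m.+2) : size b = m ->
  be + ga <= N -> al + be <= N ->
  istab (b ++ [:: al; be+ga]) t -> istab (b ++ [:: al; be+ga]) s ->
  fmap (N - be - al) t = fmap (N - be - al) s -> t = s.
Proof.
move=> hm hbg hab ht hs.
have [_ Ft3 _ _ _] := facts1 hm hbg hab ht.
have [_ Fs3 _ _ _] := facts1 hm hbg hab hs.
case: t ht Ft3 => t1 t2 ht Ft3; case: s hs Fs3 => s1 s2 hs Fs3 /= E.
case: E => -> E2; congr pair; apply/ffunP => j.
have := congr1 (fun g : {ffun 'I_N -> 'I_m.+2} => g j) E2; rewrite /= !ffunE Ft3 Fs3.
case: (leqP (N - (be + ga)) j) => c /=.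
  by move: (Ft3 j) (Fs3 j); rewrite c => /eqP -> /eqP ->.
by [].
Qed.

Lemma count_const (T : Type) (c : bool) (s : seq T) : count (fun _ => c) s = c * size s.
Proof. by elim: s => [|x s IH] /=; [rewrite muln0 | rewrite IH mulnS]. Qed.

Lemma iota_split3 a b c : a <= b -> b <= c ->
  iota 0 c = iota 0 a ++ iota a (b - a) ++ iota b (c - b).
Proof.
move=> hab hbc.
by rewrite -{1}(subnKC hbc) iotaD -{1}(subnKC hab) iotaD !add0n catA.
Qed.

Lemma cnt_nth (s : seq nat) v :
  count (fun x => nth 0 s x == v) (iota 0 (size s)) = count (pred1 v) s.
Proof. by rewrite -[in RHS](mkseq_nth 0 s) /mkseq count_map. Qed.

Definition r1f (W : seq nat) P m (x : nat) := if x < P then nth 0 W x else m.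
Definition r2f (W : seq nat) P Q L m (x : nat) :=
  if x < Q then nth 0 W (P + x) else if x < L then m else m.+1.
Definition t0 N m (b : seq nat) P Q L : tab N m.+2 :=
  ([ffun j : 'I_N => inord (r1f (word 0 b) P m j)],
   [ffun j : 'I_N => inord (r2f (word 0 b) P Q L m j)]).

Lemma t0_in b m al be ga N : size b = m ->
  sumn b + al + be + ga = N + N -> 0 < be -> al < ga ->
  be + ga <= N -> al + be <= N -> (forall i, i < m -> nth 0 b i + ga <= N) ->
  let P := N - al - 1 in let Q := sumn b - P in let L := N - be - al in
  istab (b ++ [:: ga; be + al]) (t0 N m b P Q L) /\
  #|[set j | (t0 N m b P Q L).1 j == inord m]| = al.+1.
Proof.
move=> hm hsum hbe hag hbg hab hbi P Q L.
set W := word 0 b. set S := sumn b.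
have hW : size W = S by rewrite size_word.
have hWv : forall x, x < S -> nth 0 W x < m.
  move=> x hx; have hmem : nth 0 W x \in W by rewrite mem_nth // hW.
  by have /allP /(_ _ hmem) /andP [_] := all_word 0 b; rewrite hm.
have hWs : forall x y, x <= y -> y < S -> nth 0 W x <= nth 0 W y.
  move=> x y hxy hy; apply: (sorted_leq_nth leq_trans leqnn 0 (sorted_word 0 b)).
  1,2: rewrite ?unfold_in /= ?size_word -?/S.
  - exact: leq_ltn_trans hxy hy.
  - exact: hy.
  - exact: hxy.
have hWc : forall v, count (pred1 v) W = if v < m then nth 0 b v else 0.
  move=> v; rewrite count_word subn0 /=; case: ifP => // /negbT; rewrite -leqNgt => h.
  by rewrite nth_default // hm.
have hPS : P <= S by lia.
have hQP : Q <= P by lia.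
have hQL : Q <= L by lia.
have hLP : L <= P by lia.
have hLN : L <= N by lia.
have hPN : P <= N by lia.
have vr1 : forall x : 'I_N, (t0 N m b P Q L).1 x = r1f W P m x :> nat.
  move=> x; rewrite ffunE inordK // /r1f; case: ifP => h; last lia.
  by apply: leq_trans (hWv _ _) _; lia.
have vr2 : forall x : 'I_N, (t0 N m b P Q L).2 x = r2f W P Q L m x :> nat.
  move=> x; rewrite ffunE inordK // /r2f; case: ifP => h; last by case: ifP; lia.
  by apply: leq_trans (hWv _ _) _; lia.
have cnt1 : forall v : 'I_m.+2, #|[set j | (t0 N m b P Q L).1 j == v]| =
    count (fun x => nth 0 W x == v) (iota 0 P) + (m == v) * (N - P).
  move=> v.
  have -> : #|[set j | (t0 N m b P Q L).1 j == v]| = #|[set j : 'I_N | r1f W P m j == v]|.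
    by apply: eq_card => j; rewrite !inE -val_eqE /= vr1.
  rewrite (card_iota N (fun x => r1f W P m x == v)) -(subnKC hPN) iotaD count_cat add0n.
  rewrite (subnKC hPN); congr (_ + _).
    by apply: eq_in_count => x; rewrite mem_iota => /andP [_ hx]; rewrite /r1f hx.
  rewrite -{2}(size_iota P (N - P)) -count_const.
  by apply: eq_in_count => x; rewrite mem_iota /r1f => /andP [hx _]; rewrite ltnNge hx.
have cnt2 : forall v : 'I_m.+2, #|[set j | (t0 N m b P Q L).2 j == v]| =
    count (fun x => nth 0 W x == v) (iota P Q) + (m == v) * (L - Q) + (m.+1 == v) * (N - L).
  move=> v.
  have -> : #|[set j | (t0 N m b P Q L).2 j == v]| = #|[set j : 'I_N | r2f W P Q L m j == v]|.
    by apply: eq_card => j; rewrite !inE -val_eqE /= vr2.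
  rewrite (card_iota N (fun x => r2f W P Q L m x == v)) (iota_split3 hQL hLN) !count_cat addnA.
  congr (_ + _ + _).
  - rewrite (_ : iota P Q = map (addn P) (iota 0 Q)); last by rewrite -iotaDl addn0.
    rewrite count_map; apply: eq_in_count => x; rewrite mem_iota => /andP [_ hx].
    by rewrite /= /r2f hx.
  - rewrite -{2}(size_iota Q (L - Q)) -count_const.
    apply: eq_in_count => x; rewrite mem_iota /r2f => /andP [hx hx2].
    by rewrite ltnNge hx /= (_ : x < L) //; lia.
  - rewrite -{2}(size_iota L (N - L)) -count_const.
    apply: eq_in_count => x; rewrite mem_iota /r2f => /andP [hx hx2].
    by rewrite !ltnNge hx (_ : Q <= x) //; lia.
have ePQ : P + Q = S by lia.
have tot : forall v, count (fun x => nth 0 W x == v) (iota 0 P) +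
    count (fun x => nth 0 W x == v) (iota P Q) = if v < m then nth 0 b v else 0.
  move=> v; rewrite -count_cat -[in iota P Q](add0n P) -iotaD ePQ -hW cnt_nth hWc //.
have gap : forall x, x < Q -> nth 0 W x < nth 0 W (P + x).
  move=> x hx; rewrite addnC; apply: sorted_gap; first exact: sorted_word.
    by rewrite -/W hW; lia.
  move=> v; rewrite -/W hWc; case: ifP => h; last lia.
  by have := hbi v h; lia.
split.
  apply/istabP; split.
  - move=> j1 j2 h; rewrite !vr1 /r1f.
    have := hWs j1 j2 h; have := hWv j1; have := hWv j2.
    case: ifP => c1; case: ifP => c2; lia.
  - move=> j1 j2 h; rewrite !vr2 /r2f.
    have := hWs (P + j1) (P + j2); have := hWv (P + j1); have := hWv (P + j2).
    case: ifP => c1; case: ifP => c2; try case: ifP => c3; try case: ifP => c4; lia.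
  - move=> j; rewrite vr1 vr2 /r1f /r2f.
    have := gap j; have := hWv j.
    case: ifP => c1; case: ifP => c2; try case: ifP => c3; lia.
  - move=> v; rewrite cnt1 cnt2 nth_app2 hm.
    have := tot v; have := ltn_ord v.
    move: (nat_of_ord v) => n hn.
    case: (ltngtP n m) => h.
    + by rewrite (gtn_eqF (ltnW h : n < m.+1)) /= !mul0n; lia.
    + have e : n = m.+1 by lia.
      by subst n; rewrite eqxx /= !mul0n mul1n; lia.
    + by subst n; rewrite (gtn_eqF (ltnSn m)) /= !mul0n mul1n; lia.
rewrite cnt1 inordK // eqxx mul1n.
rewrite (_ : count _ _ = 0); first lia.
apply/eqP; rewrite -leqn0 leqNgt -has_count; apply/hasPn => x.
rewrite mem_iota => /andP [_ hx]; have := hWv x; lia.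
Qed.

Lemma core b m al be ga N : size b = m ->
  sumn b + al + be + ga = N + N -> 0 < be -> al < ga ->
  be + ga <= N -> al + be <= N -> (forall i, i < m -> nth 0 b i + ga <= N) ->
  Kg N m.+2 (b ++ [:: al; be + ga]) < Kg N m.+2 (b ++ [:: ga; be + al]).
Proof.
move=> hm hsum hbe hag hbg hab hbi.
rewrite /Kg.
set A1 := [set t : tab N m.+2 | istab (b ++ [:: al; be + ga]) t].
set A2 := [set t : tab N m.+2 | istab (b ++ [:: ga; be + al]) t].
have inj : {in A1 &, injective (fmap (N - be - al))}.
  by move=> t s; rewrite !inE => ht hs; exact: (f_inj hm hbg hab ht hs).
rewrite -(card_in_imset inj); apply: proper_card; apply/properP; split.
  apply/subsetP => u /imsetP [t ht ->]; rewrite inE; apply: f_in => //; first lia.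
  by move: ht; rewrite inE.
have [h0 c0] := t0_in hm hsum hbe hag hbg hab hbi.
exists (t0 N m b (N - al - 1) (sumn b - (N - al - 1)) (N - be - al)); first by rewrite inE.
apply/negP => /imsetP [t ht E].
move: ht; rewrite inE => ht.
have [_ _ _ Fal _] := facts1 hm hbg hab ht.
rewrite E in c0.
have c1 : #|[set j | t.1 j == inord m]| = al.+1 := c0.
by move: Fal; rewrite c1 ltnn.
Qed.

Lemma pair_le a i j : reduced a -> i < j -> j < size a ->
  nth 0 a i + nth 0 a j <= nS a - 1.
Proof.
case/andP => _ /forallP H hij hj.
have hi : i < size a by apply: ltn_trans hj.
by have /forallP /(_ (Ordinal hj)) /implyP /(_ hij) := H (Ordinal hi).
Qed.

Lemma nS_even s : ~~ odd s -> s = (((s + 2)./2 - 1) + ((s + 2)./2 - 1)).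
Proof.
move=> ev; have := odd_double_half s; rewrite (negbTE ev) add0n => hk.
set k := s./2 in hk *; rewrite -hk (_ : k.*2 + 2 = (k.+1).*2); last by rewrite doubleS addn2.
by rewrite doubleK subn1 /= addnn.
Qed.

Theorem lemma2p2 (b : seq nat) (alpha beta gamma : nat) :
  reduced (b ++ [:: alpha; beta; gamma]) ->
  alpha <= beta -> beta <= gamma -> alpha < gamma ->
  K (b ++ [:: alpha; beta + gamma]) < K (b ++ [:: gamma; beta + alpha]).
Proof.
move=> hr hab hbg hag.
set m := size b.
have hsz : size (b ++ [:: alpha; beta; gamma]) = m.+3 by rewrite size_cat /= addn3.
have n0 : forall i, i < m -> nth 0 (b ++ [:: alpha; beta; gamma]) i = nth 0 b i.
  by move=> i hi; rewrite nth_cat hi.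
have n1 : nth 0 (b ++ [:: alpha; beta; gamma]) m = alpha by rewrite nth_cat ltnn subnn.
have n2 : nth 0 (b ++ [:: alpha; beta; gamma]) m.+1 = beta.
  by rewrite nth_cat ltnNge leqnSn /= subSn // subnn.
have n3 : nth 0 (b ++ [:: alpha; beta; gamma]) m.+2 = gamma.
  by rewrite nth_cat ltnNge (leqW (leqnSn m)) /= -addn2 addKn.
have hbe : 0 < beta.
  move: hr => /andP [/andP [/andP [/allP hp _] _] _]; apply: hp.
  by rewrite mem_cat !inE eqxx !orbT.
have ev : ~~ odd (sumn (b ++ [:: alpha; beta; gamma])).
  by move: hr => /andP [/andP [/andP [_ ->] _] _].
set N := nS (b ++ [:: alpha; beta; gamma]) - 1.
have hsum : sumn b + alpha + beta + gamma = N + N.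
  have := nS_even ev; rewrite /N /nS sumn_cat /= => <-; lia.
have p_bg : beta + gamma <= N.
  by have := @pair_le _ m.+1 m.+2 hr (ltnSn _); rewrite hsz n2 n3; apply.
have p_ab : alpha + beta <= N.
  by have := @pair_le _ m m.+1 hr (ltnSn _); rewrite hsz n1 n2; apply; lia.
have p_bi : forall i, i < m -> nth 0 b i + gamma <= N.
  move=> i hi; have := @pair_le _ i m.+2 hr; rewrite hsz n0 // n3; apply; lia.
have e1 : nS (b ++ [:: alpha; beta + gamma]) - 1 = N.
  by rewrite /N /nS !sumn_cat /= !addnA addn0.
have e2 : nS (b ++ [:: gamma; beta + alpha]) - 1 = N.
  rewrite /N /nS !sumn_cat /= addn0; congr (((_ + _) + 2)./2 - 1); lia.
have s1 : size (b ++ [:: alpha; beta + gamma]) = m.+2 by rewrite size_cat /= addn2.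
have s2 : size (b ++ [:: gamma; beta + alpha]) = m.+2 by rewrite size_cat /= addn2.
rewrite !K_Kg e1 e2 s1 s2.
exact: (core (erefl m) hsum hbe hag p_bg p_ab p_bi).
Qed.
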